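(* Let $K$ be a simplicial complex and let $\overrightarrow{W}$ be a Morse sequence on $K$. Then there exists exactly one reference map for $\overrightarrow{W}$ and exactly one coreference map for $\overrightarrow{W}$.
   Context: A simplicial complex $K$ is a finite collection of non-empty finite sets such that every non-empty subset of a member of $K$ is also in $K$; its members are called simplices (or faces), $\dim\sigma=|\sigma|-1$, $K^{(p)}$ denotes the set of $p$-dimensional simplices, and a facet is a simplex maximal for inclusion. A pair $(\sigma,\tau)$ of simplices of $K$ with $\sigma\subsetneq\tau$ is a free pair for $K$ if $\tau$ is the only simplex of $K$ other than $\sigma$ that contains $\sigma$ (so $\tau$ is a facet and $\dim\tau=\dim\sigma+1$); then $K$ is an elementary expansion of $K\setminus\{\sigma,\tau\}$. If $\nu$ is a facet of $K$, then $K$ is an elementary filling of $K\setminus\{\nu\}$. A Morse sequence on $K$ is a sequence $\overrightarrow{W}=\langle \emptyset=K_0,K_1,\dots,K_k=K\rangle$ of simplicial complexes such that each $K_i$ is an elementary expansion or an elementary filling of $K_{i-1}$. If $K_i=K_{i-1}\cup\{\nu\}$ is a filling, $\nu$ is called critical; if $K_i=K_{i-1}\cup\{\sigma,\tau\}$ is an expansion with $\sigma\subset\tau$, then $(\sigma,\tau)$ is a regular pair, $\sigma$ is lower regular and $\tau$ is upper regular. Let $\widehat{W}$ be the set of critical simplices. Chains mod 2: $K[p]$ is the set of all subsets of $K^{(p)}$, a vector space over $\mathbb{Z}_2$ with symmetric difference as addition, the empty chain written $0$; $\widehat{W}[p]=\{c\in K[p]: c\subseteq \widehat W\}$. For $\sigma\in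 K^{(p)}$, $\partial(\sigma)=\{\tau\in K^{(p-1)}:\tau\subset\sigma\}$ and $\delta(\sigma)=\{\tau\in K^{(p+1)}:\sigma\subset\tau\}$. A frame on $\overrightarrow{W}$ is a map $\Upsilon$ assigning to each $\nu\in K^{(p)}$ an element $\Upsilon(\nu)\in\widehat W[p]$; it is extended linearly to chains by $\Upsilon(c)=\sum_{\nu\in c}\Upsilon(\nu)$ (sum mod 2). A frame $\curlywedge$ is a reference map for $\overrightarrow{W}$ if $\curlywedge(\nu)=\{\nu\}$ for every critical $\nu$ and, for every upper regular $\tau$, $\curlywedge(\tau)=0$ and $\curlywedge(\partial(\tau))=0$. A frame $\curlyvee$ is a coreference map for $\overrightarrow{W}$ if $\curlyvee(\nu)=\{\nu\}$ for every critical $\nu$ and, for every lower regular $\sigma$, $\curlyvee(\sigma)=0$ and $\curlyvee(\delta(\sigma))=0$. *)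

(* Defs.v *)
From mathcomp Require Import all_boot.
Set Implicit Arguments. Unset Strict Implicit. Unset Printing Implicit Defensive.

Section Morse.
Variable V : finType.

Notation simplex := {set V}.
Notation cplx := {set {set V}}.

Definition is_complex (K : cplx) : Prop :=
  (forall s : simplex, s \in K -> s != set0) /\
  (forall s t : simplex, t \in K -> s \subset t -> s != set0 -> s \in K).

(* Fill nu  = inl nu      : elementary filling by the facet nu
   Exp s t  = inr (s, t)  : elementary expansion by the free pair (s, t) *)
Definition step : Type := (simplex + (simplex * simplex))%type.
Definition Fill (nu : simplex) : step := inl nu.
Definition Exp (s t : simplex) : step := inr (s, t).

Definition step_add (L : cplx) (st : step) : cplx :=
  match st with
  | inl nu => nu |: L
  | inr (s, t) => s |: (t |: L)
  end.

Definition elem_step (L : cplx) (st : step) : Prop :=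
  match st with
  | inl nu =>
      is_complex (nu |: L) /\ nu \notin L /\
      (forall x, x \in nu |: L -> nu \subset x -> x = nu)
  | inr (s, t) =>
      is_complex (s |: (t |: L)) /\ s \notin L /\ t \notin L /\
      s \proper t /\
      (forall x, x \in s |: (t |: L) -> s \subset x -> x = s \/ x = t)
  end.

Fixpoint morse_from (L : cplx) (w : seq step) : Prop :=
  match w with
  | [::] => True
  | st :: w' => elem_step L st /\ morse_from (step_add L st) w'
  end.

Definition morse_sequence (K : cplx) (w : seq step) : Prop :=
  morse_from set0 w /\ foldl step_add set0 w = K.

Definition critical (w : seq step) (nu : simplex) : Prop := Fill nu \in w.
Definition critical_set (w : seq step) : cplx := [set nu | Fill nu \in w].
Definition lower_regular (w : seq step) (s : simplex) : Prop :=
  exists t, Exp s t \in w.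
Definition upper_regular (w : seq step) (t : simplex) : Prop :=
  exists s, Exp s t \in w.

(* Chains mod 2 are sets of simplices; addition is symmetric difference. *)
Definition symdiff (A B : cplx) : cplx := (A :\: B) :|: (B :\: A).

Definition bdry (K : cplx) (s : simplex) : cplx :=
  [set x in K | (x \subset s) && (#|x| == #|s| - 1)].
Definition cobdry (K : cplx) (s : simplex) : cplx :=
  [set x in K | (s \subset x) && (#|x| == #|s| + 1)].

Definition frame_ext (U : simplex -> cplx) (c : cplx) : cplx :=
  \big[symdiff/set0]_(nu in c) U nu.

Definition is_frame (K : cplx) (w : seq step) (U : simplex -> cplx) : Prop :=
  forall nu, nu \in K ->
    U nu \subset [set c in critical_set w | #|c| == #|nu|].

Definition is_reference_map (K : cplx) (w : seq step) (U : simplex -> cplx) : Prop :=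
  is_frame K w U /\
  (forall nu, nu \in K -> critical w nu -> U nu = [set nu]) /\
  (forall t, t \in K -> upper_regular w t ->
     U t = set0 /\ frame_ext U (bdry K t) = set0).

Definition is_coreference_map (K : cplx) (w : seq step) (U : simplex -> cplx) : Prop :=
  is_frame K w U /\
  (forall nu, nu \in K -> critical w nu -> U nu = [set nu]) /\
  (forall s, s \in K -> lower_regular w s ->
     U s = set0 /\ frame_ext U (cobdry K s) = set0).

End Morse.

(* Main.v *)
From HB Require Import structures.
Require Import Defs.
From mathcomp Require Import all_boot.
Set Implicit Arguments. Unset Strict Implicit. Unset Printing Implicit Defensive.

Lemma symdiffA (V : finType) : associative (@symdiff V).
Proof. move=> A B C; apply/setP=> x; rewrite /symdiff !inE.
by case: (x \in A); case: (x \in B); case: (x \in C). Qed.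
Lemma symdiffC (V : finType) : commutative (@symdiff V).
Proof. move=> A B; apply/setP=> x; rewrite /symdiff !inE.
by case: (x \in A); case: (x \in B). Qed.
Lemma sym0d (V : finType) : left_id set0 (@symdiff V).
Proof. move=> A; apply/setP=> x; rewrite /symdiff !inE. by case: (x \in A). Qed.

HB.instance Definition _ (V : finType) :=
  Monoid.isComLaw.Build {set {set V}} set0 (@symdiff V) (@symdiffA V) (@symdiffC V) (@sym0d V).

Lemma symdiffxx (V : finType) (A : {set {set V}}) : symdiff A A = set0.
Proof. apply/setP=> x; rewrite /symdiff !inE. by case: (x \in A). Qed.
Lemma symdiff_eq0 (V : finType) (A B : {set {set V}}) : symdiff A B = set0 -> A = B.
Proof. move/setP=> H; apply/setP=> x; move: (H x); rewrite /symdiff !inE.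
by case: (x \in A); case: (x \in B). Qed.

Lemma frame_extU1 (V : finType) (U : {set V} -> {set {set V}}) (s : {set V}) (B : {set {set V}}) :
  s \notin B -> frame_ext U (s |: B) = symdiff (U s) (frame_ext U B).
Proof. move=> sB; rewrite /frame_ext big_setU1 //. Qed.

Lemma frame_ext_sub (V : finType) (U : {set V} -> {set {set V}}) (B A : {set {set V}}) :
  (forall x, x \in B -> U x \subset A) -> frame_ext U B \subset A.
Proof.
move=> H; rewrite /frame_ext; elim/big_rec: _ => [|i X /H hX hY].
  exact: sub0set.
 apply/subsetP=> x; rewrite /symdiff !inE.
by case/orP=> /andP[_ h]; [apply: (subsetP hX)|apply: (subsetP hY)].
Qed.

Lemma frame_ext_eq (V : finType) (U U' : {set V} -> {set {set V}}) (B : {set {set V}}) :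
  (forall x, x \in B -> U x = U' x) -> frame_ext U B = frame_ext U' B.
Proof. by move=> H; apply: eq_bigr. Qed.
Definition in_step (V : finType) (x : {set V}) (st : step V) : bool :=
  match st with inl nu => x == nu | inr (s, t) => (x == s) || (x == t) end.

Lemma in_step_add (V : finType) (L : {set {set V}}) st (x : {set V}) :
  (x \in step_add L st) = in_step x st || (x \in L).
Proof. case: st => [nu|[s t]] /=; by rewrite !inE ?orbA. Qed.

Lemma elem_complex (V : finType) (L : {set {set V}}) st :
  elem_step L st -> is_complex (step_add L st).
Proof. by case: st => [nu|[s t]] /= [H _]. Qed.

Lemma elem_new (V : finType) (L : {set {set V}}) st (x : {set V}) :
  elem_step L st -> in_step x st -> x \notin L.
Proof.
case: st => [nu|[s t]] /=.
  by move=> [_ [H _]] /eqP ->.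
by move=> [_ [sL [tL _]]] /orP[] /eqP ->.
Qed.

Lemma fold_sub (V : finType) (r : seq (step V)) (L : {set {set V}}) x :
  x \in L -> x \in foldl (@step_add V) L r.
Proof.
elim: r L => [|st r IH] L //= xL; apply: IH; by rewrite in_step_add xL orbT.
Qed.

Lemma morse_notin (V : finType) (r : seq (step V)) (L : {set {set V}}) st (x : {set V}) :
  morse_from L r -> st \in r -> in_step x st -> x \notin L.
Proof.
elim: r L => [|st0 r IH] L //= [H0 Hr]; rewrite in_cons => /orP[/eqP ->|str] xs.
  exact: elem_new H0 xs.
apply/negP=> xL; move: (IH _ Hr str xs); by rewrite in_step_add xL orbT.
Qed.

Lemma exp_card (V : finType) (L : {set {set V}}) s t :
  elem_step L (Exp s t) -> #|t| = #|s|.+1.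
Proof.
move=> [[_ Hc] [sL [tL [pst Hf]]]].
case/properP: pst => sst [y yt ys].
have xsub : y |: s \subset t by rewrite subUset sub1set yt sst.
have xin : y |: s \in s |: (t |: L).
  apply: Hc xsub _; first by rewrite !inE eqxx orbT.
  by apply/set0Pn; exists y; rewrite !inE eqxx.
case: (Hf _ xin (subsetUr _ _)) => [/setP/(_ y)|<-].
  by rewrite !inE eqxx (negbTE ys).
by rewrite cardsU1 ys.
Qed.

Lemma exp_proper (V : finType) (L : {set {set V}}) s t :
  elem_step L (Exp s t) -> s \proper t.
Proof. by move=> [_ [_ [_ [H _]]]]. Qed.

Lemma complex_ne0 (V : finType) (K : {set {set V}}) (x : {set V}) :
  is_complex K -> x \in K -> x != set0.
Proof. by move=> [H _] /H. Qed.

Lemma complex_closed (V : finType) (K : {set {set V}}) (x y : {set V}) :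
  is_complex K -> y \in K -> x \subset y -> x != set0 -> x \in K.
Proof. by move=> [_ H]; apply: H. Qed.

Lemma Fill_eq (V : finType) (x y : {set V}) : (Fill x == Fill y) = (x == y).
Proof. by apply/eqP/eqP => [[]|->]. Qed.
Lemma Exp_eq (V : finType) (a b s t : {set V}) : (Exp a b == Exp s t) = (a == s) && (b == t).
Proof. by apply/eqP/andP => [[-> ->]|[/eqP -> /eqP ->]]. Qed.
Lemma FillExp (V : finType) (x a b : {set V}) : (Fill x == Exp a b) = false.
Proof. by []. Qed.
Lemma ExpFill (V : finType) (x a b : {set V}) : (Exp a b == Fill x) = false.
Proof. by []. Qed.
Definition RInv (V : finType) (L : {set {set V}}) (h : seq (step V))
  (U : {set V} -> {set {set V}}) : Prop :=
  (forall nu, nu \in L -> U nu \subset [set c in critical_set h | #|c| == #|nu|]) /\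
  (forall nu, nu \in L -> Fill nu \in h -> U nu = [set nu]) /\
  (forall s t, t \in L -> Exp s t \in h -> U t = set0 /\ frame_ext U (bdry L t) = set0).

Definition Hist (V : finType) (L : {set {set V}}) (h : seq (step V)) : Prop :=
  forall st x, st \in h -> in_step x st -> x \in L.

Lemma crit_rcons (V : finType) (h : seq (step V)) st n :
  [set c in critical_set h | #|c| == n] \subset [set c in critical_set (rcons h st) | #|c| == n].
Proof.
apply/subsetP=> c; rewrite !inE mem_rcons in_cons => /andP[-> ->]; by rewrite orbT.
Qed.

Lemma bdry_add (V : finType) (L : {set {set V}}) (y t : {set V}) :
  ~~ (y \subset t) -> bdry (y |: L) t = bdry L t.
Proof.
move=> yt; apply/setP=> z; rewrite !inE.
by case: (eqVneq z y) => [->|] /=; [rewrite (negbTE yt) /= andbF|].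
Qed.

Lemma not_sub_new (V : finType) (L : {set {set V}}) (y t : {set V}) :
  is_complex L -> t \in L -> y \notin L -> y != set0 -> ~~ (y \subset t).
Proof.
by move=> HL tL yL y0; apply/negP=> yt; move: yL; rewrite (complex_closed HL tL yt y0).
Qed.

Lemma bdry_sub (V : finType) (L : {set {set V}}) t x : x \in bdry L t -> x \in L.
Proof. by rewrite inE => /andP[]. Qed.

Lemma ref_step (V : finType) (L : {set {set V}}) h U st :
  is_complex L -> Hist L h -> RInv L h U -> elem_step L st ->
  exists U1, RInv (step_add L st) (rcons h st) U1.
Proof.
move=> HL Hh [Hi [Hii Hiii]] Hst.
have Hc := elem_complex Hst.
case: st Hst Hc => [nu|[s t]] Hst Hc.
- have nuL : nu \notin L by apply: (elem_new Hst); rewrite /= eqxx.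
  have nu0 : nu != set0 by apply: (complex_ne0 Hc); rewrite /= !inE eqxx.
  exists (fun x => if x == nu then [set nu] else U x); split; [|split].
  + move=> x; rewrite /= !inE; case: (eqVneq x nu) => [->|xnu] /= xL.
      by rewrite sub1set !inE mem_rcons mem_head eqxx.
    exact: subset_trans (Hi _ xL) (crit_rcons _ _ _).
  + move=> x; rewrite /= !inE mem_rcons in_cons Fill_eq; case: (eqVneq x nu) => [->|xnu] //= xL.
    exact: Hii.
  + move=> a x; rewrite /= !inE mem_rcons in_cons ExpFill /= => _ ah.
    have xL : x \in L by apply: (Hh _ _ ah); rewrite /= eqxx orbT.
    have xnu : x != nu by apply: contraNneq nuL => <-.
    rewrite (negbTE xnu); case: (Hiii _ _ xL ah) => -> <-; split => //.
    rewrite bdry_add; last exact: (not_sub_new HL xL nuL nu0).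
    apply: frame_ext_eq => y /bdry_sub yL.
    by have -> : (y == nu) = false by apply: contraNF nuL => /eqP <-.
- have sL : s \notin L by apply: (elem_new Hst); rewrite /= eqxx.
  have tL : t \notin L by apply: (elem_new Hst); rewrite /= eqxx orbT.
  have ct := exp_card Hst.
  have pst := exp_proper Hst.
  have ts : (t == s) = false by apply/negP => /eqP ts; move: pst; rewrite ts properxx.
  have sts : s \subset t by case/andP: pst.
  have Hbt : bdry (step_add L (Exp s t)) t = s |: bdry L t.
    apply/setP=> z; rewrite /= !inE.
    case: (eqVneq z s) => [->|zs] /=; first by rewrite sts ct subn1 /= eqxx.
    case: (eqVneq z t) => [->|zt] /=; last by [].
    by rewrite (negbTE tL) ct subn1 /= (gtn_eqF (ltnSn _)) andbF.
  set F := frame_ext U (bdry L t).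
  exists (fun x => if x == t then set0 else if x == s then F else U x); split; [|split].
  + move=> x; rewrite /= !inE; case: (eqVneq x t) => [_ _|xt]; first exact: sub0set.
    case: (eqVneq x s) => [-> _|xs] /=; last first.
      move=> xL; exact: subset_trans (Hi _ xL) (crit_rcons _ _ _).
    apply: frame_ext_sub => y yb; apply: subset_trans (crit_rcons _ (Exp s t) _).
    move: yb; rewrite inE ct subn1 /= => /andP[yL /andP[_ /eqP <-]].
    exact: Hi.
  + move=> x; rewrite /= !inE mem_rcons in_cons FillExp /= => xL xh.
    have {}xL : x \in L by apply: (Hh _ _ xh); rewrite /= eqxx.
    have -> : (x == t) = false by apply: contraNF tL => /eqP <-.
    have -> : (x == s) = false by apply: contraNF sL => /eqP <-.
    exact: Hii.
  + move=> a x; rewrite /= !inE mem_rcons in_cons Exp_eq => xL /orP[/andP[_ /eqP ->]|xh].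
      rewrite eqxx; split => //.
      have -> : bdry (s |: (t |: L)) t = s |: bdry L t by exact: Hbt.
      have sb : s \notin bdry L t by apply: contra sL; apply: bdry_sub.
      rewrite frame_extU1 // eq_sym ts eqxx.
      rewrite (@frame_ext_eq _ _ U); first exact: symdiffxx.
      move=> y /bdry_sub yL.
      have -> : (y == t) = false by apply: contraNF tL => /eqP <-.
      by have -> : (y == s) = false by apply: contraNF sL => /eqP <-.
    have {}xL : x \in L by apply: (Hh _ _ xh); rewrite /= eqxx orbT.
    have -> : (x == t) = false by apply: contraNF tL => /eqP <-.
    have -> : (x == s) = false by apply: contraNF sL => /eqP <-.
    case: (Hiii _ _ xL xh) => -> <-; split => //.
    have s0 : s != set0 by apply: (complex_ne0 Hc); rewrite /= !inE eqxx.
    have t0 : t != set0 by apply: (complex_ne0 Hc); rewrite /= !inE eqxx orbT.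
    rewrite bdry_add; last exact: (not_sub_new HL xL sL s0).
    rewrite bdry_add; last exact: (not_sub_new HL xL tL t0).
    apply: frame_ext_eq => y /bdry_sub yL.
    have -> : (y == t) = false by apply: contraNF tL => /eqP <-.
    by have -> : (y == s) = false by apply: contraNF sL => /eqP <-.
Qed.

Lemma hist_step (V : finType) (L : {set {set V}}) h st :
  Hist L h -> Hist (step_add L st) (rcons h st).
Proof.
move=> Hh st' x; rewrite mem_rcons in_cons => /orP[/eqP ->|sth] xs.
  by rewrite in_step_add xs.
by rewrite in_step_add (Hh _ _ sth xs) orbT.
Qed.

Lemma ref_exist (V : finType) (r : seq (step V)) (L : {set {set V}}) h U :
  is_complex L -> Hist L h -> RInv L h U -> morse_from L r ->
  exists U', RInv (foldl (@step_add V) L r) (h ++ r) U'.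
Proof.
elim: r L h U => [|st r IH] L h U HL Hh HU /=.
  by move=> _; exists U; rewrite cats0.
move=> [Hst Hr]; case: (ref_step HL Hh HU Hst) => U1 HU1.
rewrite -cat_rcons; apply: (IH _ _ U1) => //.
  exact: elem_complex Hst.
exact: hist_step.
Qed.

Lemma ref_uniq (V : finType) (K : {set {set V}}) (w : seq (step V)) U1 U2 :
  is_complex K -> is_reference_map K w U1 -> is_reference_map K w U2 ->
  forall (r : seq (step V)) (L : {set {set V}}), morse_from L r ->
  {subset r <= w} -> foldl (@step_add V) L r \subset K ->
  (forall x, x \in L -> U1 x = U2 x) ->
  forall x, x \in foldl (@step_add V) L r -> U1 x = U2 x.
Proof.
move=> HK [_ [Hc1 Hu1]] [_ [Hc2 Hu2]].
elim=> [|st r IH] L //= [Hst Hr] rw sK HL; apply: IH => //.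
  by move=> st' st'r; apply: rw; rewrite in_cons st'r orbT.
have stw : st \in w by apply: rw; rewrite mem_head.
have inK : forall x, x \in step_add L st -> x \in K.
  by move=> x xL; apply: (subsetP sK); apply: fold_sub.
move=> x; rewrite in_step_add; case/orP; last exact: HL.
clear rw Hr sK; case: st Hst stw inK => [nu|[s t]] Hst stw inK /=.
  move/eqP=> ->; have nuK : nu \in K by apply: inK; rewrite /= !inE eqxx.
  by rewrite Hc1 // Hc2.
have sK' : s \in K by apply: inK; rewrite /= !inE eqxx.
have tK : t \in K by apply: inK; rewrite /= !inE eqxx orbT.
have ur : upper_regular w t by exists s.
case/orP=> /eqP ->; last by case: (Hu1 _ tK ur) => ->; case: (Hu2 _ tK ur) => ->.
have ct := exp_card Hst.
have sts : s \subset t by case/andP: (exp_proper Hst).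
have sb : s \in bdry K t by rewrite inE sK' sts ct subn1 /=.
have Hrest : forall y, y \in bdry K t :\ s -> y \in L.
  move=> y; rewrite !inE => /andP[ys /andP[yK /andP[yt /eqP yc]]].
  have Hc := elem_complex Hst.
  have := complex_closed Hc (_ : t \in step_add L (Exp s t)) yt (complex_ne0 HK yK).
  rewrite /= !inE (negbTE ys) /= => /(_ _)/orP[||//].
  - by rewrite eqxx orbT.
  - by move/eqP=> yt'; move: yc; rewrite yt' ct subn1 => /eqP; rewrite (gtn_eqF (ltnSn _)).
have E1 := (Hu1 _ tK ur).2; have E2 := (Hu2 _ tK ur).2.
rewrite -(setD1K sb) frame_extU1 ?setD11 // in E1.
rewrite -(setD1K sb) frame_extU1 ?setD11 // in E2.
move/symdiff_eq0: E1 => ->; move/symdiff_eq0: E2 => ->.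
apply: frame_ext_eq => y /Hrest; exact: HL.
Qed.
Definition CInv (V : finType) (K L : {set {set V}}) (r : seq (step V))
  (U : {set V} -> {set {set V}}) : Prop :=
  (forall nu, nu \in K -> nu \notin L -> U nu \subset [set c in critical_set r | #|c| == #|nu|]) /\
  (forall nu, nu \in K -> nu \notin L -> Fill nu \in r -> U nu = [set nu]) /\
  (forall s t, s \in K -> s \notin L -> Exp s t \in r -> U s = set0 /\ frame_ext U (cobdry K s) = set0).

Lemma crit_cons (V : finType) (h : seq (step V)) st n :
  [set c in critical_set h | #|c| == n] \subset [set c in critical_set (st :: h) | #|c| == n].
Proof.
apply/subsetP=> c; rewrite !inE => /andP[-> ->]; by rewrite orbT.
Qed.

Lemma cobdry_out (V : finType) (K L : {set {set V}}) (x y : {set V}) :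
  is_complex K -> is_complex L -> x \in K -> x \notin L -> y \in cobdry K x -> y \notin L.
Proof.
move=> HK HL xK xL; rewrite inE => /andP[_ /andP[xy _]].
by apply: contra xL => yL; apply: (complex_closed HL yL xy (complex_ne0 HK xK)).
Qed.

Lemma core_exist (V : finType) (K : {set {set V}}) (r : seq (step V)) (L : {set {set V}}) :
  is_complex K -> morse_from L r -> foldl (@step_add V) L r = K ->
  exists U, CInv K L r U.
Proof.
move=> HK; elim: r L => [|st r IH] L /=.
  move=> _ ->; exists (fun _ => set0); split; [|split] => x; by rewrite ?negbK => ? /negP.
move=> [Hst Hr] HKf; case: (IH _ Hr HKf) => U [Hi [Hii Hiii]].
have HL' := elem_complex Hst.
have L'K : forall x, x \in step_add L st -> x \in K by move=> x xL; rewrite -HKf; apply: fold_sub.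
have nr : forall st' x, st' \in r -> in_step x st' -> x \notin step_add L st.
  by move=> st' x; apply: morse_notin.
case: st Hst Hr HKf HL' L'K nr Hi Hii Hiii => [nu|[s t]] Hst _ _ HL' L'K nr Hi Hii Hiii.
- have nuL' : nu \in step_add L (Fill nu) by rewrite /= !inE eqxx.
  exists (fun x => if x == nu then [set nu] else U x); split; [|split].
  + move=> x xK; case: (eqVneq x nu) => [-> _|xnu xL].
      by rewrite sub1set !inE /Fill !eqxx.
    have xL' : x \notin step_add L (Fill nu) by rewrite /= !inE negb_or xnu.
    exact: subset_trans (Hi _ xK xL') (crit_cons _ _ _).
  + move=> x xK xL; rewrite in_cons Fill_eq; case: (eqVneq x nu) => [->|xnu] //= xr.
    have xL' : x \notin step_add L (Fill nu) by rewrite /= !inE negb_or xnu.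
    exact: Hii.
  + move=> a b aK aL; rewrite in_cons ExpFill /= => abr.
    have aL' : a \notin step_add L (Fill nu) by apply: (nr _ _ abr); rewrite /= eqxx.
    have anu : (a == nu) = false by apply: contraNF aL' => /eqP ->.
    rewrite anu; case: (Hiii _ _ aK aL' abr) => -> <-; split => //.
    apply: frame_ext_eq => y /(cobdry_out HK HL' aK aL') yL.
    by have -> : (y == nu) = false by apply: contraNF yL => /eqP ->.
- have sL' : s \in step_add L (Exp s t) by rewrite /= !inE eqxx.
  have tL' : t \in step_add L (Exp s t) by rewrite /= !inE eqxx orbT.
  have ct := exp_card Hst.
  have pst := exp_proper Hst.
  have ts : (t == s) = false by apply/negP => /eqP ts; move: pst; rewrite ts properxx.
  have sts : s \subset t by case/andP: pst.
  have tc : t \in cobdry K s by rewrite inE L'K // sts ct addn1 /=.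
  have Hrest : forall z, z \in cobdry K s :\ t -> z \notin step_add L (Exp s t).
    move=> z /setD1P [zt]; rewrite inE => /andP[zK /andP[sz /eqP zc]].
    apply/negP=> zL; move: Hst => [_ [_ [_ [_ Hf]]]].
    case: (Hf z zL sz) => zs; last by move: zt; rewrite zs eqxx.
    by move: zc; rewrite zs addn1 => /eqP; rewrite (ltn_eqF (ltnSn _)).
  have nst : forall z, z \notin step_add L (Exp s t) -> (z == s) = false /\ (z == t) = false.
    move=> z zL; split; [apply: contraNF zL => /eqP -> //|apply: contraNF zL => /eqP -> //].
  set F := frame_ext U (cobdry K s :\ t).
  exists (fun x => if x == s then set0 else if x == t then F else U x); split; [|split].
  + move=> x xK xL; case: (eqVneq x s) => [_|xs]; first exact: sub0set.
    case: (eqVneq x t) => [->|xt].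
      apply: frame_ext_sub => z zr; apply: subset_trans (crit_cons _ (Exp s t) _).
      move: (zr); rewrite !inE => /andP[_ /andP[zK /andP[_ /eqP zc]]].
      by rewrite ct -addn1 -zc; apply: Hi => //; apply: Hrest.
    have xL' : x \notin step_add L (Exp s t) by rewrite /= !inE negb_or xs negb_or xt.
    exact: subset_trans (Hi _ xK xL') (crit_cons _ _ _).
  + move=> x xK xL; rewrite in_cons FillExp /= => xr.
    have xL' : x \notin step_add L (Exp s t) by apply: (nr _ _ xr); rewrite /= eqxx.
    case: (nst _ xL') => -> ->; exact: Hii.
  + move=> a b aK aL; rewrite in_cons Exp_eq => /orP[/andP[/eqP -> _]|abr].
      rewrite eqxx; split => //.
      rewrite -(setD1K tc) frame_extU1 ?setD11 // ts eqxx.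
      rewrite (@frame_ext_eq _ _ U); first exact: symdiffxx.
      by move=> z /Hrest /nst [-> ->].
    have aL' : a \notin step_add L (Exp s t) by apply: (nr _ _ abr); rewrite /= eqxx.
    case: (nst _ aL') => -> ->.
    case: (Hiii _ _ aK aL' abr) => -> <-; split => //.
    apply: frame_ext_eq => y /(cobdry_out HK HL' aK aL') /nst [-> ->] //.
Qed.

Lemma core_uniq (V : finType) (K : {set {set V}}) (w : seq (step V)) U1 U2 :
  is_complex K -> is_coreference_map K w U1 -> is_coreference_map K w U2 ->
  forall (r : seq (step V)) (L : {set {set V}}), morse_from L r ->
  {subset r <= w} -> foldl (@step_add V) L r = K ->
  forall x, x \in K -> x \notin L -> U1 x = U2 x.
Proof.
move=> HK [_ [Hc1 Hu1]] [_ [Hc2 Hu2]].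
elim=> [|st r IH] L /= => [_ _ -> x -> //|[Hst Hr] rw HKf x xK xL].
have IH' := IH _ Hr (fun st' st'r => rw st' (introT orP (or_intror st'r))) HKf.
case: (boolP (x \in step_add L st)) => xL'; last exact: IH'.
have stw : st \in w by apply: rw; rewrite mem_head.
have L'K : forall x, x \in step_add L st -> x \in K by move=> y yL; rewrite -HKf; apply: fold_sub.
have HL' := elem_complex Hst.
move: xL'; rewrite in_step_add (negbTE xL) orbF.
clear rw Hr HKf IH; case: st Hst stw IH' L'K HL' => [nu|[s t]] Hst stw IH' L'K HL' /=.
  move/eqP=> ->; have nuK : nu \in K by apply: L'K; rewrite /= !inE eqxx.
  by rewrite Hc1 // Hc2.
have sK : s \in K by apply: L'K; rewrite /= !inE eqxx.
have lr : lower_regular w s by exists t.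
case/orP=> /eqP ->; first by case: (Hu1 _ sK lr) => ->; case: (Hu2 _ sK lr) => ->.
have ct := exp_card Hst.
have sts : s \subset t by case/andP: (exp_proper Hst).
have tc : t \in cobdry K s by rewrite inE L'K ?sts ?ct ?addn1 //= !inE eqxx orbT.
have Hrest : forall z, z \in cobdry K s :\ t -> z \in K /\ z \notin step_add L (Exp s t).
  move=> z /setD1P [zt]; rewrite inE => /andP[zK /andP[sz /eqP zc]]; split => //.
  apply/negP=> zL; move: Hst => [_ [_ [_ [_ Hf]]]].
  case: (Hf z zL sz) => zs; last by move: zt; rewrite zs eqxx.
  by move: zc; rewrite zs addn1 => /eqP; rewrite (ltn_eqF (ltnSn _)).
have E1 := (Hu1 _ sK lr).2; have E2 := (Hu2 _ sK lr).2.
rewrite -(setD1K tc) frame_extU1 ?setD11 // in E1.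
rewrite -(setD1K tc) frame_extU1 ?setD11 // in E2.
move/symdiff_eq0: E1 => ->; move/symdiff_eq0: E2 => ->.
apply: frame_ext_eq => y /Hrest [yK yL]; exact: IH'.
Qed.

Theorem theorem1 (V : finType) (K : {set {set V}}) (w : seq (step V)) :
  is_complex K -> morse_sequence K w ->
  (exists U : {set V} -> {set {set V}},
      is_reference_map K w U /\
      (forall U', is_reference_map K w U' -> forall nu, nu \in K -> U' nu = U nu)) /\
  (exists U : {set V} -> {set {set V}},
      is_coreference_map K w U /\
      (forall U', is_coreference_map K w U' -> forall nu, nu \in K -> U' nu = U nu)).
Proof.
move=> HK [Hm HKf].
have H0 : is_complex (set0 : {set {set V}}) by split=> [s|s t]; rewrite inE.
split.
  have [U [Hi [Hii Hiii]]] : exists U, RInv (foldl (@step_add V) set0 w) ([::] ++ w) U.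
    apply: (ref_exist (U := fun _ => set0)) => //.
    by split; [|split] => [nu|nu|s t]; rewrite inE.
  rewrite HKf /= in Hi Hii Hiii.
  have HU : is_reference_map K w U.
    split; first exact: Hi.
    split; first exact: Hii.
    by move=> t tK [s Hs]; apply: (Hiii s t tK Hs).
  exists U; split => // U' HU' nu nuK.
  apply: (ref_uniq HK HU' HU Hm) => //; rewrite ?HKf ?subxx // => x; by rewrite inE.
have [U2 [Hi2 [Hii2 Hiii2]]] := core_exist HK Hm HKf.
have HU2 : is_coreference_map K w U2.
  split; first by move=> nu nuK; apply: Hi2; rewrite ?inE.
  split; first by move=> nu nuK; apply: Hii2; rewrite ?inE.
  by move=> s sK [t Ht]; apply: (Hiii2 s t) => //; rewrite inE.
exists U2; split => // U' HU' nu nuK.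
by apply: (core_uniq HK HU' HU2 Hm) => //; rewrite inE.
Qed.
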